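(* Let $G$ be a graph and let $\mathbf{K}=(K,\mathbf{a},\mathbf{b})\in\mathscr{G}(k,l)$, $\mathbf{H}=(H,\mathbf{a}',\mathbf{b}')\in\mathscr{G}(k',l')$. Then: (1) $\hat T^G_{\mathbf{K}}\otimes\hat T^G_{\mathbf{H}}=\sum_f\hat T^G_{\mathbf{K}\cup_f\mathbf{H}}$, where the sum runs over all vertex overlaps $f$ of $K$ and $H$; (2) if $k'=l$, then $\hat T^G_{\mathbf{H}}\hat T^G_{\mathbf{K}}=\sum_f\hat T^G_{\mathbf{H}\cdot_f\mathbf{K}}$, where the sum runs over all vertex overlaps $f$ of $K$ and $H$ with $(b_i,a'_i)\in f$ for all $i$; in particular $\hat T^G_{\mathbf{H}}\hat T^G_{\mathbf{K}}=0$ if $\ker\mathbf{b}\ne\ker\mathbf{a}'$; (3) $(\hat T^G_{\mathbf{K}})^*=\hat T^G_{\mathbf{K}^*}$.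
   Context: Graphs are finite, undirected, without multiple edges, loops allowed; graph homomorphisms map edges (including loops) to edges. A bilabelled graph $(K,\mathbf{a},\mathbf{b})\in\mathscr{G}(k,l)$ consists of a graph $K$ and tuples $\mathbf{a}\in V(K)^k$, $\mathbf{b}\in V(K)^l$ (up to isomorphism); its involution is $(K,\mathbf{b},\mathbf{a})$. A vertex overlap of $K,H$ is a subset $f\subset V(K)\times V(H)$ in which each vertex occurs at most once; $K\cup_fH$ is the quotient of $K\sqcup H$ identifying $v$ with $w$ for $(v,w)\in f$ (edges between vertices of the quotient iff between some representatives), with induced maps $f_K,f_H$. Then $\mathbf{K}\cup_f\mathbf{H}:=(K\cup_fH,f_K(\mathbf{a})f_H(\mathbf{a}'),f_K(\mathbf{b})f_H(\mathbf{b}'))$ (concatenated tuples), and, if $(b_i,a'_i)\in f$ for all $i$, $\mathbf{H}\cdot_f\mathbf{K}:=(K\cup_fH,f_K(\mathbf{a}),f_H(\mathbf{b}'))$. $\ker\mathbf{b}$ is the partition of positions of $\mathbf{b}$ by equal entries. With the vertices of $G$ labelled $1,\dots,n$, $\hat T^G_{\mathbf{K}}\colon(\mathbb{C}^n)^{\otimes k}\to(\mathbb{C}^n)^{\otimes l}$ has entries $[\hat T^G_{\mathbf{K}}]_{\mathbf{j}\mathbf{i}}=\#\{\phi\colon K\to G\text{ injective homomorphism}\mid\phi(\mathbf{a})=\mathbf{i},\phi(\mathbf{b})=\mathbf{j}\}$ (coefficient of $e_{j_1}\otimes\cdots\otimes e_{j_l}$ in the image of $e_{i_1}\otimes\cdots\otimes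 e_{i_k}$). *)

(* Defs.v *)
From HB Require Import structures.
From mathcomp Require Import all_boot all_order all_algebra all_field.
Set Implicit Arguments. Unset Strict Implicit. Unset Printing Implicit Defensive.
Import Order.TTheory GRing.Theory Num.Theory.
Local Open Scope ring_scope.

(* Graphs: a finite vertex type V with an edge relation E : rel V, assumed
   symmetric (undirected); loops (E v v) are allowed; no multi-edges.
   A bilabelled graph (K,a,b) in G(k,l): a graph (VK,EK) with
   a : {ffun 'I_k -> VK}, b : {ffun 'I_l -> VK} (tuples as finite functions). *)

Definition is_hom (V W : finType) (E : rel V) (F : rel W) (phi : {ffun V -> W}) : bool :=
  [forall u, forall v, E u v ==> F (phi u) (phi v)].

(* An "operator" (C^V)^{(x)k} -> (C^V)^{(x)l}, given by its entries:
   op j i = coefficient of e_{j_1}(x)..(x)e_{j_l} in the image of e_{i_1}(x)..(x)e_{i_k}. *)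
Definition op (V : finType) (k l : nat) := {ffun 'I_l -> V} -> {ffun 'I_k -> V} -> algC.

Definition Thom (VG : finType) (EG : rel VG) (VK : finType) (EK : rel VK)
  (k l : nat) (a : {ffun 'I_k -> VK}) (b : {ffun 'I_l -> VK}) : op VG k l :=
  fun j i => (#|[set phi : {ffun VK -> VG} | [&& injectiveb phi, is_hom EK EG phi,
        [ffun x => phi (a x)] == i & [ffun x => phi (b x)] == j]]|)%:R.

(* Tensor product, using the identification of (C^n)^{(x)l}(x)(C^n)^{(x)l'}
   with (C^n)^{(x)(l+l')} via concatenation of index tuples. *)
Definition tensorop (V : finType) (k l k' l' : nat) (A : op V k l) (B : op V k' l') :
  op V (k + k') (l + l') :=
  fun J I => A [ffun x => J (lshift l' x)] [ffun x => I (lshift k' x)]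
           * B [ffun x => J (rshift l x)] [ffun x => I (rshift k x)].

Definition compop (V : finType) (k l m : nat) (B : op V l m) (A : op V k l) : op V k m :=
  fun j i => \sum_(t : {ffun 'I_l -> V}) B j t * A t i.

Definition adjop (V : finType) (k l : nat) (A : op V k l) : op V l k :=
  fun i j => (A j i)^*.

Section Overlap.
Variables (VK VH : finType) (EK : rel VK) (EH : rel VH).

Definition overlap (f : {set VK * VH}) : bool :=
  [forall p in f, forall q in f, ((p.1 == q.1) || (p.2 == q.2)) ==> (p == q)].

Definition ovl_eqv (f : {set VK * VH}) (x y : VK + VH) : bool :=
  (x == y) ||
  match x, y with
  | inl v, inr w => (v, w) \in f
  | inr w, inl v => (v, w) \in f
  | _, _ => false
  end.

Definition ovl_class (f : {set VK * VH}) (x : VK + VH) : {set VK + VH} :=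
  [set y | ovl_eqv f x y].

Definition is_ovl_class (f : {set VK * VH}) (C : {set VK + VH}) : bool :=
  [exists x, C == ovl_class f x].

(* vertex set of K \cup_f H : the equivalence classes *)
Definition Qv (f : {set VK * VH}) : finType := {C : {set VK + VH} | is_ovl_class f C}.

Lemma ovl_class_ok (f : {set VK * VH}) (x : VK + VH) : is_ovl_class f (ovl_class f x).
Proof. by apply/existsP; exists x. Qed.

Definition qproj (f : {set VK * VH}) (x : VK + VH) : Qv f :=
  exist _ (ovl_class f x) (ovl_class_ok f x).

Definition fK (f : {set VK * VH}) (v : VK) : Qv f := qproj f (inl v).
Definition fH (f : {set VK * VH}) (w : VH) : Qv f := qproj f (inr w).

Definition sumE (x y : VK + VH) : bool :=
  match x, y with
  | inl v, inl v' => EK v v'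
  | inr w, inr w' => EH w w'
  | _, _ => false
  end.

Definition unionE (f : {set VK * VH}) : rel (Qv f) :=
  fun q q' => [exists x, exists y, [&& qproj f x == q, qproj f y == q' & sumE x y]].

Definition unionL (f : {set VK * VH}) (m m' : nat)
  (c : {ffun 'I_m -> VK}) (c' : {ffun 'I_m' -> VH}) : {ffun 'I_(m + m') -> Qv f} :=
  [ffun i => match split i with
             | inl i1 => fK f (c i1)
             | inr i2 => fH f (c' i2)
             end].

End Overlap.

Definition kerT (V : finType) (l : nat) (b : {ffun 'I_l -> V}) : {set {set 'I_l}} :=
  [set [set j | b j == b i] | i : 'I_l].

Definition castT (V : finType) (m m' : nat) (e : m = m') (c : {ffun 'I_m -> V}) :
  {ffun 'I_m' -> V} := [ffun i => c (cast_ord (esym e) i)].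

Arguments qproj {VK VH} f x.
Arguments fK {VK VH} f v.
Arguments fH {VK VH} f w.
Arguments unionL {VK VH} f {m m'} c c'.
Arguments unionE {VK VH} EK EH f _ _.

(* Main.v *)
Require Import Defs.
From HB Require Import structures.
From mathcomp Require Import all_boot all_order all_algebra all_field.
Set Implicit Arguments. Unset Strict Implicit. Unset Printing Implicit Defensive.
Import Order.TTheory GRing.Theory Num.Theory.
Local Open Scope ring_scope.

Section Gen.
Variables (VG VK VH : finType) (EG : rel VG) (EK : rel VK) (EH : rel VH).

Definition pairT := ({ffun VK -> VG} * {ffun VH -> VG})%type.

Definition coinc (p : pairT) : {set VK * VH} := [set vw | p.1 vw.1 == p.2 vw.2].

Definition good (p : pairT) : bool :=
  [&& injectiveb p.1, is_hom EK EG p.1, injectiveb p.2 & is_hom EH EG p.2].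

Definition sumf (p : pairT) (x : VK + VH) : VG :=
  match x with inl v => p.1 v | inr w => p.2 w end.

Lemma ovP (f : {set VK * VH}) : overlap f ->
  forall p q, p \in f -> q \in f -> (p.1 == q.1) || (p.2 == q.2) -> p = q.
Proof.
move=> /forallP H p q pf qf e.
by move: (H p); rewrite pf /= => /forallP/(_ q); rewrite qf e /= => /eqP.
Qed.

Lemma coinc_overlap p : good p -> overlap (coinc p).
Proof.
case/and4P => /injectiveP i1 _ /injectiveP i2 _.
apply/forallP => [[v w]]; apply/implyP; rewrite inE /= => /eqP E1.
apply/forallP => [[v' w']]; apply/implyP; rewrite inE /= => /eqP E2.
apply/implyP => /orP [/eqP e|/eqP e]; subst.
- by rewrite (i2 _ _ (etrans (esym E1) E2)).
- by rewrite (i1 _ _ (etrans E1 (esym E2))).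
Qed.

Lemma pairs_partition (S : {set pairT}) : (forall p, p \in S -> good p) ->
  #|S| = (\sum_(f : {set VK * VH} | overlap f) #|[set p in S | coinc p == f]|)%N.
Proof.
move=> Sg; rewrite -sum1_card.
rewrite (partition_big coinc (fun f => overlap f)); last first.
  by move=> p /Sg /coinc_overlap.
apply: eq_bigr => f _; rewrite -sum1_card; apply: eq_bigl => p; rewrite !inE.
by [].
Qed.

Section Core.
Variable f : {set VK * VH}.
Hypothesis ovf : overlap f.

Lemma ovl_eqv_sym x y : ovl_eqv f x y = ovl_eqv f y x.
Proof. by rewrite /ovl_eqv eq_sym; case: x; case: y. Qed.

Lemma ovl_eqv_refl x : ovl_eqv f x x.
Proof. by rewrite /ovl_eqv eqxx. Qed.

Lemma ovl_eqv_trans x y z : ovl_eqv f x y -> ovl_eqv f y z -> ovl_eqv f x z.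
Proof.
have H := ovP ovf.
rewrite /ovl_eqv.
case: x => [v|w]; case: y => [v1|w1]; case: z => [v2|w2] /=.
- by rewrite !orbF => /eqP[->] /eqP[->].
- by rewrite orbF => /eqP[->].
- move=> h1 h2; have := H _ _ h1 h2; rewrite /= eqxx orbT => /(_ isT) [->].
  by rewrite eqxx.
- by move=> h; rewrite orbF => /eqP[<-].
- by move=> h; rewrite orbF => /eqP[<-].
- move=> h1 h2; have := H _ _ h1 h2; rewrite /= eqxx => /(_ isT) [->].
  by rewrite eqxx.
- by rewrite orbF => /eqP[->].
- by rewrite !orbF => /eqP[->] /eqP[->].
Qed.

Lemma class_eq x y : ovl_eqv f x y -> ovl_class f x = ovl_class f y.
Proof.
move=> e; apply/setP => z; rewrite !inE; apply/idP/idP.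
- by apply: ovl_eqv_trans; rewrite ovl_eqv_sym.
- exact: ovl_eqv_trans.
Qed.

Lemma qproj_eq x y : (qproj f x == qproj f y) = ovl_eqv f x y.
Proof.
apply/eqP/idP.
- move/(congr1 val) => /= E.
  have : y \in ovl_class f y by rewrite inE ovl_eqv_refl.
  by rewrite -E inE.
- by move/class_eq => E; apply: val_inj.
Qed.

Definition rep (C : Qv f) : VK + VH := xchoose (existsP (valP C)).

Lemma qproj_rep C : qproj f (rep C) = C.
Proof.
apply: val_inj => /=; rewrite /rep.
by move: (xchooseP (existsP (valP C))) => /eqP <-.
Qed.

Lemma qproj_surj C : exists x, qproj f x = C.
Proof. by exists (rep C); apply: qproj_rep. Qed.

Definition sp (phi : {ffun Qv f -> VG}) : pairT :=
  ([ffun v => phi (fK f v)], [ffun w => phi (fH f w)]).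

Lemma sumf_sp phi x : sumf (sp phi) x = phi (qproj f x).
Proof. by case: x => ? /=; rewrite ffunE. Qed.

Lemma coinc_eqv p : coinc p = f -> forall x y, ovl_eqv f x y -> sumf p x = sumf p y.
Proof.
move=> cf x y; rewrite /ovl_eqv; case: x => [v|w]; case: y => [v1|w1] /=;
  rewrite ?orbF.
- by move/eqP=> [->].
- by rewrite -cf inE => /eqP.
- by rewrite -cf inE => /eqP.
- by move/eqP=> [->].
Qed.

Lemma sumf_inj p : good p -> coinc p = f -> forall x y,
  sumf p x = sumf p y -> ovl_eqv f x y.
Proof.
case/and4P => /injectiveP i1 _ /injectiveP i2 _ cf x y.
rewrite /ovl_eqv; case: x => [v|w]; case: y => [v1|w1] /= e; rewrite ?orbF.
- by rewrite (i1 _ _ e).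
- by rewrite -cf inE e.
- by rewrite -cf inE e.
- by rewrite (i2 _ _ e).
Qed.

Definition Phi (p : pairT) : {ffun Qv f -> VG} := [ffun C => sumf p (rep C)].

Lemma Phi_qproj p x : coinc p = f -> Phi p (qproj f x) = sumf p x.
Proof.
move=> cf; rewrite ffunE; apply: coinc_eqv => //.
by rewrite -qproj_eq qproj_rep.
Qed.

Lemma core (P : pred pairT) :
  #|[set phi : {ffun Qv f -> VG} |
      [&& injectiveb phi, is_hom (unionE EK EH f) EG phi & P (sp phi)]]|
  = #|[set p | [&& good p, coinc p == f & P p]]|.
Proof.
rewrite -(card_in_imset (f := sp)); last first.
  move=> phi psi _ _ E; apply/ffunP => C; have [x <-] := qproj_surj C.
  by rewrite -!sumf_sp E.
apply: eq_card => p; rewrite [in RHS]inE; apply/imsetP/idP.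
- case=> phi; rewrite inE => /and3P [/injectiveP iphi hphi Pp] ->.
  apply/and3P; split => //.
  + apply/and4P; split.
    * apply/injectiveP => v v'; rewrite /= !ffunE => /iphi/eqP.
      by rewrite qproj_eq /ovl_eqv /= orbF => /eqP [].
    * apply/forallP => u; apply/forallP => v; apply/implyP => e.
      rewrite /= !ffunE; move/forallP: hphi => /(_ (fK f u)) /forallP /(_ (fK f v)).
      move/implyP; apply; apply/existsP; exists (inl u); apply/existsP; exists (inl v).
      by rewrite !eqxx.
    * apply/injectiveP => v v'; rewrite /= !ffunE => /iphi/eqP.
      by rewrite qproj_eq /ovl_eqv /= orbF => /eqP [].
    * apply/forallP => u; apply/forallP => v; apply/implyP => e.
      rewrite /= !ffunE; move/forallP: hphi => /(_ (fH f u)) /forallP /(_ (fH f v)).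
      move/implyP; apply; apply/existsP; exists (inr u); apply/existsP; exists (inr v).
      by rewrite !eqxx.
  + apply/eqP/setP => [[v w]]; rewrite inE /= !ffunE (inj_eq iphi) qproj_eq.
    by rewrite /ovl_eqv.
- case/and3P => gp /eqP cf Pp.
  have spP : sp (Phi p) = p.
    rewrite /sp [RHS]surjective_pairing; congr pair; apply/ffunP => v.
    + by move: (Phi_qproj (inl v) cf); rewrite !ffunE.
    + by move: (Phi_qproj (inr v) cf); rewrite !ffunE.
  exists (Phi p) => //; rewrite inE spP Pp andbT; apply/andP; split.
  + apply/injectiveP => C C'; have [x <-] := qproj_surj C; have [y <-] := qproj_surj C'.
    rewrite !Phi_qproj // => /(sumf_inj gp cf) e; apply/eqP; by rewrite qproj_eq.
  + apply/forallP => q; apply/forallP => q'; apply/implyP.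
    case/existsP => x /existsP [y /and3P [/eqP <- /eqP <- Exy]].
    rewrite !Phi_qproj //.
    case/and4P: gp => _ /forallP h1 _ /forallP h2.
    case: x y Exy => [u|u] [v|v] //= Exy.
    * by move: (h1 u) => /forallP /(_ v) /implyP; apply.
    * by move: (h2 u) => /forallP /(_ v) /implyP; apply.
Qed.
Lemma labelU m m' (c : {ffun 'I_m -> VK}) (c' : {ffun 'I_m' -> VH})
  (phi : {ffun Qv f -> VG}) (L : {ffun 'I_(m + m') -> VG}) :
  ([ffun x => phi (unionL f c c' x)] == L) =
  ([ffun x => (sp phi).1 (c x)] == [ffun x => L (lshift m' x)]) &&
  ([ffun x => (sp phi).2 (c' x)] == [ffun x => L (rshift m x)]).
Proof.
apply/eqP/andP.
- move=> <-; split; apply/eqP/ffunP => x; rewrite !ffunE.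
  + by have := unsplitK (inl x : 'I_m + 'I_m'); move=> /= ->.
  + by have := unsplitK (inr x : 'I_m + 'I_m'); move=> /= ->.
- case=> /eqP/ffunP H1 /eqP/ffunP H2; apply/ffunP => i; rewrite -(splitK i).
  case: (split i) => x /=.
  + move: (H1 x); rewrite !ffunE => <-.
    by have := unsplitK (inl x : 'I_m + 'I_m'); move=> /= ->.
  + move: (H2 x); rewrite !ffunE => <-.
    by have := unsplitK (inr x : 'I_m + 'I_m'); move=> /= ->.
Qed.

Lemma labelK m (c : {ffun 'I_m -> VK}) (phi : {ffun Qv f -> VG}) L :
  ([ffun x => phi (fK f (c x))] == L) = ([ffun x => (sp phi).1 (c x)] == L).
Proof. by congr (_ == _); apply/ffunP => x; rewrite !ffunE. Qed.

Lemma labelH m (c : {ffun 'I_m -> VH}) (phi : {ffun Qv f -> VG}) L :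
  ([ffun x => phi (fH f (c x))] == L) = ([ffun x => (sp phi).2 (c x)] == L).
Proof. by congr (_ == _); apply/ffunP => x; rewrite !ffunE. Qed.

Lemma Thom_core m1 m2 (A : {ffun 'I_m1 -> Qv f}) (B : {ffun 'I_m2 -> Qv f})
  (j : {ffun 'I_m2 -> VG}) (i : {ffun 'I_m1 -> VG})
  (P : pred pairT) :
  (forall phi : {ffun Qv f -> VG}, ([ffun x => phi (A x)] == i) && ([ffun x => phi (B x)] == j) = P (sp phi)) ->
  Thom EG (unionE EK EH f) A B j i = (#|[set p | [&& good p, coinc p == f & P p]]|)%:R.
Proof.
move=> HP; rewrite /Thom -core; congr (_%:R); apply: eq_card => phi.
by rewrite !inE HP.
Qed.

End Core.

Lemma compat_iff m (c : {ffun 'I_m -> VK}) (c' : {ffun 'I_m -> VH}) p f :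
  coinc p = f ->
  ([ffun x => p.2 (c' x)] == [ffun x => p.1 (c x)]) = [forall x, (c x, c' x) \in f].
Proof.
move=> <-; apply/eqP/forallP => [E x | H].
- by rewrite inE /=; move/ffunP: E => /(_ x); rewrite !ffunE => ->.
- by apply/ffunP => x; rewrite !ffunE; move: (H x); rewrite inE => /eqP ->.
Qed.

Definition S2set l m k (a2 : {ffun 'I_l -> VH}) (b' : {ffun 'I_m -> VH})
  (a : {ffun 'I_k -> VK}) (b : {ffun 'I_l -> VK}) j i : {set pairT} :=
  [set p : pairT | [&& [&& injectiveb p.1, is_hom EK EG p.1 & [ffun x => p.1 (a x)] == i],
     [&& injectiveb p.2, is_hom EH EG p.2 & [ffun x => p.2 (b' x)] == j] &
     [ffun x => p.2 (a2 x)] == [ffun x => p.1 (b x)]]].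

Lemma comp_count l m k (a2 : {ffun 'I_l -> VH}) (b' : {ffun 'I_m -> VH})
  (a : {ffun 'I_k -> VK}) (b : {ffun 'I_l -> VK}) j i :
  compop (Thom EG EH a2 b') (Thom EG EK a b) j i = (#|S2set a2 b' a b j i|)%:R.
Proof.
rewrite /compop /Thom; under eq_bigr do rewrite -natrM; rewrite -natr_sum.
congr (_%:R); rewrite -sum1_card.
rewrite (partition_big (fun p : pairT => [ffun x => p.1 (b x)]) predT) //.
apply: eq_bigr => t _; rewrite mulnC -cardsX -sum1_card; apply: eq_bigl => p.
rewrite !inE; apply/idP/idP.
- case/andP => [/and4P[i1 h1 la /eqP bt] /and4P[i2 h2 /eqP ht lb]].
  by rewrite i1 h1 la i2 h2 lb ht bt !eqxx.
- case/andP => [/and3P[/and3P[i1 h1 la] /and3P[i2 h2 lb] /eqP c] /eqP ct].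
  by rewrite i1 h1 la i2 h2 lb -ct c !eqxx.
Qed.

End Gen.

Unset Implicit Arguments.

Theorem proposition4p5
  (VG : finType) (EG : rel VG) (symG : symmetric EG)
  (VK : finType) (EK : rel VK) (symK : symmetric EK)
  (k l : nat) (a : {ffun 'I_k -> VK}) (b : {ffun 'I_l -> VK})
  (VH : finType) (EH : rel VH) (symH : symmetric EH)
  (k' l' : nat) (a' : {ffun 'I_k' -> VH}) (b' : {ffun 'I_l' -> VH}) :
  (* (1) *)
  (forall (J : {ffun 'I_(l + l') -> VG}) (I : {ffun 'I_(k + k') -> VG}),
     tensorop (Thom EG EK a b) (Thom EG EH a' b') J I
     = \sum_(f : {set VK * VH} | overlap f)
         Thom EG (unionE EK EH f) (unionL f a a') (unionL f b b') J I)
  /\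
  (* (2) *)
  (forall e : k' = l,
     (forall (j : {ffun 'I_l' -> VG}) (i : {ffun 'I_k -> VG}),
        compop (Thom EG EH (castT e a') b') (Thom EG EK a b) j i
        = \sum_(f : {set VK * VH} | overlap f && [forall x, (b x, castT e a' x) \in f])
            Thom EG (unionE EK EH f) [ffun x => fK f (a x)] [ffun x => fH f (b' x)] j i)
     /\
     (kerT b != kerT (castT e a') ->
        forall (j : {ffun 'I_l' -> VG}) (i : {ffun 'I_k -> VG}),
          compop (Thom EG EH (castT e a') b') (Thom EG EK a b) j i = 0))
  /\
  (* (3) *)
  (forall (i : {ffun 'I_k -> VG}) (j : {ffun 'I_l -> VG}),
     adjop (Thom EG EK a b) i j = Thom EG EK b a i j).
Proof.
split; [|split].
- move=> J I.
  pose P1 := fun p : pairT VG VK VH =>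
    (([ffun x => p.1 (a x)] == [ffun x => I (lshift k' x)]) &&
     ([ffun x => p.2 (a' x)] == [ffun x => I (rshift k x)])) &&
    (([ffun x => p.1 (b x)] == [ffun x => J (lshift l' x)]) &&
     ([ffun x => p.2 (b' x)] == [ffun x => J (rshift l x)])).
  rewrite (eq_bigr (fun f => (#|[set p | [&& good EG EK EH p, coinc p == f & P1 p]]|)%:R));
    last first.
    by move=> f ovf; apply: Thom_core => // phi; rewrite !labelU.
  rewrite /tensorop /Thom -natrM -cardsX -natr_sum; congr (_%:R).
  rewrite (@pairs_partition _ _ _ EG EK EH); last first.
    move=> p; rewrite !inE => /andP[/and4P[i1 h1 _ _] /and4P[i2 h2 _ _]].
    by rewrite /good i1 h1 i2 h2.
  apply: eq_bigr => f _; apply: eq_card => p; rewrite !inE /P1 /good.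
  apply/idP/idP.
  + case/andP => [/andP[/and4P[i1 h1 la lb] /and4P[i2 h2 la' lb']] c].
    by rewrite i1 h1 la lb i2 h2 la' lb' c.
  + case/and3P => [/and4P[i1 h1 i2 h2] c /and3P[/andP[la la'] lb lb']].
    by rewrite i1 h1 la lb i2 h2 la' lb' c.
- move=> e; set a2 := castT e a'; split.
  + move=> j i; rewrite comp_count.
    pose P2 := fun p : pairT VG VK VH =>
      ([ffun x => p.1 (a x)] == i) && ([ffun x => p.2 (b' x)] == j).
    rewrite (eq_bigr (fun f => (#|[set p | [&& good EG EK EH p, coinc p == f & P2 p]]|)%:R));
      last first.
      move=> f /andP[ovf _]; apply: Thom_core => // phi.
      by rewrite /P2; congr (_ && _); congr (_ == _); apply/ffunP => x; rewrite !ffunE.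
    rewrite -natr_sum; congr (_%:R).
    rewrite (@pairs_partition _ _ _ EG EK EH); last first.
      move=> p; rewrite !inE => /and3P[/and3P[i1 h1 _] /and3P[i2 h2 _] _].
      by rewrite /good i1 h1 i2 h2.
    rewrite big_mkcondr; apply: eq_bigr => f ovf; case: ifP => Qf.
    * apply: eq_card => p; rewrite !inE /P2 /good.
      apply/idP/idP.
      - case/andP => [/and3P[/and3P[i1 h1 la] /and3P[i2 h2 lb] c] /eqP cf].
        by rewrite i1 h1 la i2 h2 lb cf eqxx.
      - case/and3P => [/and4P[i1 h1 i2 h2] /eqP cf /andP[la lb]].
        by rewrite i1 h1 la i2 h2 lb cf eqxx (compat_iff _ _ cf) Qf.
    * apply/eqP; rewrite cards_eq0; apply/eqP/setP => p; rewrite !inE.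
      apply/negbTE/negP => /andP[/and3P[_ _ c] /eqP cf].
      by rewrite (compat_iff _ _ cf) Qf in c.
  + move=> nk j i; rewrite comp_count.
    suff -> : S2set EG EK EH a2 b' a b j i = set0 by rewrite cards0.
    apply/setP => p; rewrite !inE; apply/negbTE/negP.
    case/and3P => [/and3P[/injectiveP i1 _ _] /and3P[/injectiveP i2 _ _] /eqP/ffunP E].
    move/negP: nk; apply; apply/eqP; rewrite /kerT; apply: eq_imset => x.
    apply/setP => y; rewrite !inE -(inj_eq i1) -(inj_eq i2).
    by move: (E x) (E y); rewrite !ffunE => -> ->.
- move=> i j; rewrite /adjop /Thom conjC_nat; congr (_%:R); apply: eq_card => phi.
  by rewrite !inE; congr (_ && (_ && _)); apply: andbC.
Qed.
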